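(* Let $Q=\{q_1,\dots,q_N\}$ be a finite set of binary questions, and for each $i$ let $(x_i^+,x_i^-)$ be the contrast pair of input texts corresponding to $q_i$. Let $h:Q\to\{0,1\}$ be an arbitrary map. Define the probe $p$ by $p(x_i^+)=h(q_i)$ and $p(x_i^-)=1-h(q_i)$ for all $i$. Then $p$ attains the optimal (minimum possible) value of the CCS loss $$\mathcal{L}_{\mathrm{CCS}}(p)=\sum_{i=1}^N\Big(\big[p(x_i^+)-(1-p(x_i^-))\big]^2+\min\{p(x_i^+),p(x_i^-)\}^2\Big)$$ over all probes, and its averaged prediction satisfies $\tilde p(q_i)=\tfrac12\big[p(x_i^+)+(1-p(x_i^-))\big]=h(q_i)$ for every $i$.
   Context: A probe is any function $p$ assigning to each input text $x_i^+$, $x_i^-$ ($i=1,\dots,N$) a real number in $[0,1]$. The CCS (contrast-consistent search) loss of a probe is the sum displayed in the claim, consisting of a consistency term $[p(x_i^+)-(1-p(x_i^-))]^2$ and a confidence term $\min\{p(x_i^+),p(x_i^-)\}^2$ for each question. The averaged prediction of a probe on question $q_i$ is $\tilde p(q_i)=\tfrac12[p(x_i^+)+(1-p(x_i^-))]$. *)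

(* Defs.v *)
From mathcomp Require Import all_boot all_order all_algebra.
Set Implicit Arguments. Unset Strict Implicit. Unset Printing Implicit Defensive.
Import Order.TTheory GRing.Theory Num.Theory.
Local Open Scope ring_scope.

(* The 2N input texts are x_i^+ (encoded (i, true)) and x_i^- (encoded (i, false)).
   A probe assigns a real number to every input text. *)
Definition probe (R : realFieldType) (N : nat) := 'I_N -> bool -> R.

Definition is_probe (R : realFieldType) (N : nat) (p : probe R N) : Prop :=
  forall i b, 0 <= p i b <= 1.

Definition ccs_loss (R : realFieldType) (N : nat) (p : probe R N) : R :=
  \sum_(i < N) ((p i true - (1 - p i false)) ^+ 2
                + (Num.min (p i true) (p i false)) ^+ 2).

Definition avg_pred (R : realFieldType) (N : nat) (p : probe R N) (i : 'I_N) : R :=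
  (p i true + (1 - p i false)) / 2.

Definition probe_of_h (R : realFieldType) (N : nat) (h : 'I_N -> bool) : probe R N :=
  fun i b => if b then (h i)%:R else 1 - (h i)%:R.

(* Main.v *)
Require Import Defs.
From mathcomp Require Import all_boot all_order all_algebra.
Import Order.TTheory GRing.Theory Num.Theory.
Local Open Scope ring_scope.

Theorem theorem1 (R : realFieldType) (N : nat) (h : 'I_N -> bool) :
  is_probe (probe_of_h R h) /\
  (forall q : probe R N, is_probe q -> ccs_loss (probe_of_h R h) <= ccs_loss q) /\
  (forall i : 'I_N, avg_pred (probe_of_h R h) i = (h i)%:R).
Proof.
split; [|split].
- move=> i b; rewrite /probe_of_h; case: b; case: (h i) => /=;
    rewrite ?subrr ?subr0 ?lexx ?ler01 ?ler10 //.
- move=> q _.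
  have -> : ccs_loss (probe_of_h R h) = 0.
    rewrite /ccs_loss big1 // => i _; rewrite /probe_of_h /=.
    have m01 : Num.min (0:R) 1 = 0 by rewrite /Num.min ltr01.
    have m10 : Num.min (1:R) 0 = 0 by rewrite /Num.min ltr10.
    case: (h i) => /=; rewrite ?subrr ?subr0 ?sub0r ?opprK ?subrr;
      rewrite ?m01 ?m10 ?oppr0 expr0n /= ?addr0 ?subrr ?expr0n //.
  rewrite /ccs_loss; apply: (sumr_ge0 _) => i _; by rewrite addr_ge0 // sqr_ge0.
- move=> i; rewrite /avg_pred /probe_of_h /=.
  case: (h i) => /=; rewrite ?subr0 ?subrr ?addr0 ?add0r ?mul0r //.
  by rewrite subr0 -[1 + 1]/(2%:R) mulfV // pnatr_eq0.
Qed.
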